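(* Let $M$ be a finite monoid and let $J$ and $J'$ be two $\mathscr{J}$-classes of $M$ such that $A(J)=A(J')$. Then the relation $\theta_J\cup\theta_{J'}$ is a congruence of $M$.
   Context: Green's relations on $M$: $a\mathscr{H}b$ iff $Ma=Mb$ and $aM=bM$; $a\mathscr{J}b$ iff $MaM=MbM$. $J_a$ is the $\mathscr{J}$-class of $a$; $J_a\leqslant_{\mathscr{J}}J_b$ iff $MaM\subseteq MbM$, and $J_a<_{\mathscr{J}}J_b$ iff $J_a\leqslant_{\mathscr{J}}J_b$ and $J_a\neq J_b$. For a $\mathscr{J}$-class $J$, $A(J)=\{a\in M: J_a<_{\mathscr{J}}J\}$, and $\theta_J$ is the relation: $a\,\theta_J\,b$ iff $a=b$, or $a,b\in A(J)$, or $a,b\in J$ and $a\mathscr{H}b$. *)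

(* Defs.v *)
From mathcomp Require Import all_boot.
Set Implicit Arguments. Unset Strict Implicit. Unset Printing Implicit Defensive.

Section FinMonoid.
Variables (M : finType) (mul : M -> M -> M) (one : M).

Definition is_monoid : Prop :=
  associative mul /\ left_id one mul /\ right_id one mul.

Definition lideal (a : M) : {set M} := [set mul m a | m : M].
Definition rideal (a : M) : {set M} := [set mul a m | m : M].
Definition ideal (a : M) : {set M} := [set mul (mul m a) n | m : M, n : M].

Definition Hrel (a b : M) : Prop := lideal a = lideal b /\ rideal a = rideal b.
Definition Jrel (a b : M) : Prop := ideal a = ideal b.

Definition Jclass (a : M) : {set M} := [set b | ideal b == ideal a].
Definition is_Jclass (J : {set M}) : Prop := exists a, J = Jclass a.

Definition Jle (J1 J2 : {set M}) : Prop :=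
  exists a b, J1 = Jclass a /\ J2 = Jclass b /\ ideal a \subset ideal b.
Definition Jlt (J1 J2 : {set M}) : Prop := Jle J1 J2 /\ J1 <> J2.

Definition Aset (J : {set M}) : M -> Prop := fun a => Jlt (Jclass a) J.

Definition theta (J : {set M}) (a b : M) : Prop :=
  a = b \/ (Aset J a /\ Aset J b) \/ ((a \in J) /\ (b \in J) /\ Hrel a b).

Definition is_congruence (R : M -> M -> Prop) : Prop :=
  (forall a, R a a) /\ (forall a b, R a b -> R b a) /\
  (forall a b c, R a b -> R b c -> R a c) /\
  (forall a b c, R a b -> R (mul c a) (mul c b)) /\
  (forall a b c, R a b -> R (mul a c) (mul b c)).

End FinMonoid.

(* Main.v *)
Require Import Defs.
From mathcomp Require Import all_boot.
Set Implicit Arguments.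

Lemma in_lideal (M : finType) (mul : M -> M -> M) (a x : M) :
  (x \in lideal mul a) = [exists m, x == mul m a].
Proof.
apply/imsetP/existsP => [[m _ ->]|[m /eqP ->]]; first by exists m.
by exists m.
Qed.

Lemma in_rideal (M : finType) (mul : M -> M -> M) (a x : M) :
  (x \in rideal mul a) = [exists m, x == mul a m].
Proof.
apply/imsetP/existsP => [[m _ ->]|[m /eqP ->]]; first by exists m.
by exists m.
Qed.

Lemma in_ideal (M : finType) (mul : M -> M -> M) (a x : M) :
  (x \in ideal mul a) <-> exists m n, x = mul (mul m a) n.
Proof.
split.
  by case/imset2P => m n _ _ ->; exists m, n.
by case=> m [n ->]; apply/imset2P; exists m n.
Qed.

Lemma ideal_self (M : finType) (mul : M -> M -> M) (one : M) a :
  is_monoid mul one -> a \in ideal mul a.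
Proof.
case=> _ [l r]; apply/in_ideal; exists one, one; by rewrite l r.
Qed.

Lemma ideal_sub (M : finType) (mul : M -> M -> M) (one : M) a b :
  is_monoid mul one -> a \in ideal mul b -> ideal mul a \subset ideal mul b.
Proof.
move=> [A _] /in_ideal [m [n ->]]; apply/subsetP => x /in_ideal [p [q ->]].
apply/in_ideal; exists (mul p m), (mul n q).
by rewrite !A.
Qed.

Lemma JclassE (M : finType) (mul : M -> M -> M) a b :
  (Jclass mul a = Jclass mul b) <-> ideal mul a = ideal mul b.
Proof.
split.
  move=> E; have : a \in Jclass mul a by rewrite inE.
  by rewrite E inE => /eqP.
by move=> E; apply/setP => x; rewrite !inE E.
Qed.

Lemma in_Jclass (M : finType) (mul : M -> M -> M) a x :
  x \in Jclass mul a -> Jclass mul x = Jclass mul a.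
Proof. by rewrite inE => /eqP E; apply/JclassE. Qed.

Lemma AsetE (M : finType) (mul : M -> M -> M) x q :
  Aset mul (Jclass mul q) x <->
  (ideal mul x \subset ideal mul q /\ ideal mul x <> ideal mul q).
Proof.
split.
  case=> [[p [q' [E1 [E2 S]]]] N]; split.
    by move/JclassE: E1 => ->; move/JclassE: E2 => ->.
  by move=> E; apply: N; apply/JclassE.
case=> S N; split; first by exists x, q.
by move/JclassE.
Qed.

Lemma notA_in (M : finType) (mul : M -> M -> M) (J : {set M}) x :
  is_Jclass mul J -> x \in J -> ~ Aset mul J x.
Proof.
case=> q -> /in_Jclass E /AsetE [_ N]; apply: N; exact/JclassE.
Qed.

Lemma stab_l (M : finType) (mul : M -> M -> M) (one : M) c a u v :
  is_monoid mul one -> a = mul (mul u (mul c a)) v ->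
  lideal mul a = lideal mul (mul c a).
Proof.
move=> [A _] Ea.
have S : lideal mul (mul c a) \subset lideal mul a.
  apply/subsetP => x; rewrite !in_lideal => /existsP [m /eqP ->].
  by apply/existsP; exists (mul m c); rewrite A.
have S2 : lideal mul a \subset (fun y => mul y v) @: lideal mul (mul c a).
  apply/subsetP => x; rewrite in_lideal => /existsP [m /eqP ->].
  apply/imsetP; exists (mul (mul m u) (mul c a)).
    by rewrite in_lideal; apply/existsP; exists (mul m u).
  by rewrite {1}Ea !A.
apply/esym/eqP; rewrite eqEcard S /=.
apply: leq_trans (subset_leq_card S2) (leq_imset_card _ _).
Qed.

Lemma stab_r (M : finType) (mul : M -> M -> M) (one : M) c a u v :
  is_monoid mul one -> a = mul (mul u (mul a c)) v ->
  rideal mul a = rideal mul (mul a c).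
Proof.
move=> [A _] Ea.
have S : rideal mul (mul a c) \subset rideal mul a.
  apply/subsetP => x; rewrite !in_rideal => /existsP [m /eqP ->].
  by apply/existsP; exists (mul c m); rewrite A.
have S2 : rideal mul a \subset (fun y => mul u y) @: rideal mul (mul a c).
  apply/subsetP => x; rewrite in_rideal => /existsP [m /eqP ->].
  apply/imsetP; exists (mul (mul a c) (mul v m)).
    by rewrite in_rideal; apply/existsP; exists (mul v m).
  by rewrite {1}Ea !A.
apply/esym/eqP; rewrite eqEcard S /=.
apply: leq_trans (subset_leq_card S2) (leq_imset_card _ _).
Qed.

Lemma mem_rideal_self (M : finType) (mul : M -> M -> M) (one : M) a :
  is_monoid mul one -> a \in rideal mul a.
Proof. by case=> _ [_ r]; rewrite in_rideal; apply/existsP; exists one; rewrite r. Qed.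

Lemma mem_lideal_self (M : finType) (mul : M -> M -> M) (one : M) a :
  is_monoid mul one -> a \in lideal mul a.
Proof. by case=> _ [l _]; rewrite in_lideal; apply/existsP; exists one; rewrite l. Qed.

Lemma ideal_eq_mem (M : finType) (mul : M -> M -> M) (one : M) a b :
  is_monoid mul one -> ideal mul a = ideal mul b ->
  exists u v, a = mul (mul u b) v.
Proof. by move=> Hm E; apply/in_ideal; rewrite -E; apply: ideal_self Hm. Qed.

Lemma Aset_sub (M : finType) (mul : M -> M -> M) (one : M) (J : {set M}) x y :
  is_monoid mul one -> is_Jclass mul J -> ideal mul y \subset ideal mul x ->
  Aset mul J x -> Aset mul J y.
Proof.
move=> Hm [q ->] Syx /AsetE [Sx N]; apply/AsetE; split.
  exact: subset_trans Syx Sx.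
move=> E; apply: N; apply/eqP; rewrite eqEsubset Sx /=.
by rewrite -E.
Qed.

Lemma theta_left (M : finType) (mul : M -> M -> M) (one : M) (J : {set M}) a b c :
  is_monoid mul one -> is_Jclass mul J -> theta mul J a b ->
  theta mul J (mul c a) (mul c b).
Proof.
move=> Hm HJ; have [A [l r]] := Hm.
have Sl : forall x, ideal mul (mul c x) \subset ideal mul x.
  move=> x; apply: ideal_sub Hm _; apply/in_ideal; exists c, one; by rewrite r.
case=> [->|[[Aa Ab]|[aJ [bJ [HL HR]]]]]; first by left.
  by right; left; split; apply: Aset_sub Hm HJ (Sl _) _.
have [q EJ] := HJ; subst J.
have : a \in rideal mul b by rewrite -HR; apply: mem_rideal_self Hm.
rewrite in_rideal => /existsP [m1 /eqP Ea].
have : b \in rideal mul a by rewrite HR; apply: mem_rideal_self Hm.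
rewrite in_rideal => /existsP [m2 /eqP Eb].
have Rsub : forall x y m, x = mul y m -> rideal mul (mul c x) \subset rideal mul (mul c y).
  move=> x y m ->; apply/subsetP => z; rewrite !in_rideal => /existsP [n /eqP ->].
  by apply/existsP; exists (mul m n); rewrite !A.
have Isub : forall x y m, x = mul y m -> ideal mul (mul c x) \subset ideal mul (mul c y).
  move=> x y m Ex; apply: ideal_sub Hm _; apply/in_ideal; exists one, m.
  by rewrite l Ex A.
have EI : ideal mul (mul c a) = ideal mul (mul c b).
  by apply/eqP; rewrite eqEsubset (Isub _ _ _ Ea) (Isub _ _ _ Eb).
have ER : rideal mul (mul c a) = rideal mul (mul c b).
  by apply/eqP; rewrite eqEsubset (Rsub _ _ _ Ea) (Rsub _ _ _ Eb).
move: (aJ) (bJ); rewrite !inE => /eqP Ia /eqP Ib.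
have [Ecq|Ncq] := eqVneq (ideal mul (mul c a)) (ideal mul q).
  right; right; split; first by rewrite inE Ecq.
  split; first by rewrite inE -EI Ecq.
  split=> //.
  have [u [v Eu]] := ideal_eq_mem Hm (etrans Ia (esym Ecq)).
  have [u' [v' Eu']] := ideal_eq_mem Hm (etrans Ib (esym (etrans (esym EI) Ecq))).
  by rewrite -(stab_l _ _ _ Hm Eu) -(stab_l _ _ _ Hm Eu').
right; left; split; apply/AsetE; split.
- by rewrite -Ia; apply: Sl.
- by move=> E; move: Ncq; rewrite E eqxx.
- by rewrite -Ib; apply: Sl.
- by move=> E; move: Ncq; rewrite EI E eqxx.
Qed.

Lemma theta_right (M : finType) (mul : M -> M -> M) (one : M) (J : {set M}) a b c :
  is_monoid mul one -> is_Jclass mul J -> theta mul J a b ->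
  theta mul J (mul a c) (mul b c).
Proof.
move=> Hm HJ; have [A [l r]] := Hm.
have Sl : forall x, ideal mul (mul x c) \subset ideal mul x.
  move=> x; apply: ideal_sub Hm _; apply/in_ideal; exists one, c; by rewrite l.
case=> [->|[[Aa Ab]|[aJ [bJ [HL HR]]]]]; first by left.
  by right; left; split; apply: Aset_sub Hm HJ (Sl _) _.
have [q EJ] := HJ; subst J.
have : a \in lideal mul b by rewrite -HL; apply: mem_lideal_self Hm.
rewrite in_lideal => /existsP [m1 /eqP Ea].
have : b \in lideal mul a by rewrite HL; apply: mem_lideal_self Hm.
rewrite in_lideal => /existsP [m2 /eqP Eb].
have Lsub : forall x y m, x = mul m y -> lideal mul (mul x c) \subset lideal mul (mul y c).
  move=> x y m ->; apply/subsetP => z; rewrite !in_lideal => /existsP [n /eqP ->].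
  by apply/existsP; exists (mul n m); rewrite !A.
have Isub : forall x y m, x = mul m y -> ideal mul (mul x c) \subset ideal mul (mul y c).
  move=> x y m Ex; apply: ideal_sub Hm _; apply/in_ideal; exists m, one.
  by rewrite r Ex A.
have EI : ideal mul (mul a c) = ideal mul (mul b c).
  by apply/eqP; rewrite eqEsubset (Isub _ _ _ Ea) (Isub _ _ _ Eb).
have EL : lideal mul (mul a c) = lideal mul (mul b c).
  by apply/eqP; rewrite eqEsubset (Lsub _ _ _ Ea) (Lsub _ _ _ Eb).
move: (aJ) (bJ); rewrite !inE => /eqP Ia /eqP Ib.
have [Ecq|Ncq] := eqVneq (ideal mul (mul a c)) (ideal mul q).
  right; right; split; first by rewrite inE Ecq.
  split; first by rewrite inE -EI Ecq.
  split=> //.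
  have [u [v Eu]] := ideal_eq_mem Hm (etrans Ia (esym Ecq)).
  have [u' [v' Eu']] := ideal_eq_mem Hm (etrans Ib (esym (etrans (esym EI) Ecq))).
  by rewrite -(stab_r _ _ _ Hm Eu) -(stab_r _ _ _ Hm Eu').
right; left; split; apply/AsetE; split.
- by rewrite -Ia; apply: Sl.
- by move=> E; move: Ncq; rewrite E eqxx.
- by rewrite -Ib; apply: Sl.
- by move=> E; move: Ncq; rewrite EI E eqxx.
Qed.

Lemma theta_trans (M : finType) (mul : M -> M -> M) (K1 K2 : {set M}) a b c :
  is_Jclass mul K1 -> is_Jclass mul K2 ->
  (forall x, Aset mul K1 x <-> Aset mul K2 x) ->
  theta mul K1 a b -> theta mul K2 b c -> theta mul K1 a c \/ theta mul K2 a c.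
Proof.
move=> H1 H2 HA.
case=> [->|[[Aa Ab]|[aK [bK [HL HR]]]]]; first by right.
- case=> [<-|[[_ Ac]|[bK2 _]]]; first by left; right; left.
    by left; right; left; split=> //; exact: (proj2 (HA c) Ac).
  by case: (notA_in H2 bK2); exact: (proj1 (HA b) Ab).
- case=> [<-|[[Ab _]|[bK2 [cK2 [HL' HR']]]]]; first by left; right; right.
    by case: (notA_in H1 bK); exact: (proj2 (HA b) Ab).
  have E : K1 = K2.
    case: H1 bK => q1 -> /in_Jclass <-; case: H2 bK2 => q2 -> /in_Jclass <-.
    by [].
  left; right; right; split=> //; split; first by rewrite E.
  by split; [rewrite HL HL'|rewrite HR HR'].
Qed.

Lemma theta_sym (M : finType) (mul : M -> M -> M) (K : {set M}) a b :
  theta mul K a b -> theta mul K b a.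
Proof.
case=> [->|[[? ?]|[? [? [? ?]]]]]; [by left|by right; left|by right; right].
Qed.

Unset Implicit Arguments.

Theorem lemma3p5 (M : finType) (mul : M -> M -> M) (one : M)
  (J J' : {set M}) :
  is_monoid mul one ->
  is_Jclass mul J -> is_Jclass mul J' ->
  (forall a, Aset mul J a <-> Aset mul J' a) ->
  is_congruence mul (fun a b => theta mul J a b \/ theta mul J' a b).
Proof.
move=> Hm HJ HJ' HA.
have HA' : forall a, Aset mul J' a <-> Aset mul J a by move=> a; split; [exact: (proj2 (HA a))|exact: (proj1 (HA a))].
have HAr : forall (K : {set M}) a, Aset mul K a <-> Aset mul K a by [].
split; first by move=> a; left; left.
split; first by move=> a b [] ?; [left|right]; apply: theta_sym.
split.
  move=> a b c [] Hab [] Hbc.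
  - by case: (theta_trans HJ HJ (HAr J) Hab Hbc) => ?; left.
  - exact: (theta_trans HJ HJ' HA Hab Hbc).
  - by case: (theta_trans HJ' HJ HA' Hab Hbc) => ?; [right|left].
  - by case: (theta_trans HJ' HJ' (HAr J') Hab Hbc) => ?; right.
split.
  by move=> a b c [] H; [left|right]; apply: theta_left Hm _ H.
by move=> a b c [] H; [left|right]; apply: theta_right Hm _ H.
Qed.
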